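(* Let $A$ be associative and let $f,g\in\mathcal{S}(\Omega)$. If $x\in\Omega$ is real and $x\in V(f)\cup V(g)$, then $x\in V(f\cdot g)$. More generally: (1) If $\mathbb{S}_x\subseteq V(f)$ or $\mathbb{S}_x\subseteq V(g)$, then $\mathbb{S}_x\subseteq V(f\cdot g)$. If $x\in\Omega\setminus\mathbb{R}$ and $f'_s(x)$, $g'_s(x)$ and $(f\cdot g)'_s(x)$ belong to $C_A$, then: (2) If $\mathbb{S}_x\cap V(f)=\{y\}$ and $\mathbb{S}_x\cap V(g)=\emptyset$, then $\mathbb{S}_x\cap V(f\cdot g)=\{y\}$. (3) If $\mathbb{S}_x\cap V(f)=\emptyset$ and $\mathbb{S}_x\cap V(g)=\{z\}$, then $f^c(z)\in C_A\setminus\{0\}$ and $\mathbb{S}_x\cap V(f\cdot g)=\{f^c(z)^{-1}zf^c(z)\}$. (4) If $\mathbb{S}_x\cap V(f)=\{y\}$ and $\mathbb{S}_x\cap V(g)=\{z\}$, then either (a) $\mathbb{S}_x\subseteq V(f\cdot g)$, or (b) $\mathbb{S}_x\cap V(f\cdot g)=\{y\}$, depending on whether or not $y^cf'_s(x)=f'_s(x)z$.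
   Context: Let $A$ be a finite-dimensional associative real algebra with unit $1$ ($\mathbb{R}$ identified with $\mathbb{R}1$), with a $^*$-involution $x\mapsto x^c$ (real linear, $(x^c)^c=x$, $(xy)^c=y^cx^c$, $r^c=r$ for $r\in\mathbb{R}$). Let $t(x)=x+x^c$, $n(x)=xx^c$. $C_A=\{0\}\cup\{a:n(a),n(a^c)$ are invertible elements of the center of $A\}$. $\mathbb{S}_A=\{J\in A:t(J)=0,n(J)=1\}$ (assumed non-empty), $Q_A=\mathbb{R}\cup\{x:t(x),n(x)\in\mathbb{R},4n(x)>t(x)^2\}$; every $x\in Q_A$ is $\alpha+\beta J$ with $\alpha,\beta\in\mathbb{R}$, $J\in\mathbb{S}_A$; $x^c=\alpha-\beta J$, $\mathrm{im}(x)=x-t(x)/2$, $\mathbb{S}_x=\{\alpha+\beta I:I\in\mathbb{S}_A\}$. Let $D\subseteq\mathbb{C}$ be non-empty, invariant under conjugation, $\Omega=\{\alpha+\beta J:\alpha+i\beta\in D,J\in\mathbb{S}_A\}$. $A_{\mathbb{C}}=\{a+\imath b\}$ with $(a+\imath b)(a'+\imath b')=aa'-bb'+\imath(ab'+ba')$, $\overline{a+\imath b}=a-\imath b$, $(a+\imath b)^c=a^c+\imath b^c$. A stem function $F=F_1+\imath F_2:D\to A_{\mathbb{C}}$ satisfies $F(\bar z)=\overline{F(z)}$ and induces the slice function $f=\mathcal{I}(F)$, $f(\alpha+\beta J)=F_1(\alpha+i\beta)+JF_2(\alpha+i\beta)$; $\mathcal{S}(\Omega)$ is the set of slice functions; slice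 product $f\cdot g=\mathcal{I}(FG)$; $f^c=\mathcal{I}(F^c)$ with $F^c(z)=F(z)^c$. $V(h)=\{x:h(x)=0\}$. $f'_s(x)=\frac12\mathrm{im}(x)^{-1}(f(x)-f(x^c))$ for $x\in\Omega\setminus\mathbb{R}$. *)

(* Defs.v *)
From HB Require Import structures.
From mathcomp Require Import all_boot all_order all_algebra.
From mathcomp Require Import falgebra.
From mathcomp Require Import reals.
From Stdlib Require Import ClassicalEpsilon.

Set Implicit Arguments.
Unset Strict Implicit.
Unset Printing Implicit Defensive.

Import GRing.Theory Num.Theory.
Local Open Scope ring_scope.

Section SliceDefs.
Variables (R : realType) (A : falgType R).

Definition is_involution (c : A -> A) : Prop :=
  [/\ (forall x y, c (x + y) = c x + c y),
      (forall (r : R) x, c (r *: x) = r *: c x),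
      (forall x, c (c x) = x),
      (forall x y, c (x * y) = c y * c x) &
      (forall r : R, c (r%:A) = r%:A)].

Variable c : A -> A.

Definition tr (x : A) : A := x + c x.
Definition nrm (x : A) : A := x * c x.

Definition central (z : A) : Prop := forall y : A, z * y = y * z.

Definition inC (a : A) : Prop :=
  a = 0 \/
  [/\ central (nrm a), nrm a \is a GRing.unit,
      central (nrm (c a)) & nrm (c a) \is a GRing.unit].

Definition inS (J : A) : Prop := tr J = 0 /\ nrm J = 1.

Definition is_real (x : A) : Prop := exists r : R, x = r%:A.

(* D is a subset of C, represented as a predicate on pairs (alpha, beta)
   standing for alpha + i beta. *)
Variable D : R * R -> Prop.

Definition conj_invariant : Prop := forall a b, D (a, b) -> D (a, - b).

Definition inOmega (x : A) : Prop :=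
  exists a b J, [/\ D (a, b), inS J & x = a%:A + b *: J].

Definition inSx (x y : A) : Prop :=
  exists a b J I, [/\ inS J, inS I, x = a%:A + b *: J & y = a%:A + b *: I].

(* A stem function F = F1 + i F2 : D -> A_C with F(conj z) = conj (F z). *)
Definition is_stem (F1 F2 : R -> R -> A) : Prop :=
  forall a b, D (a, b) -> F1 a (- b) = F1 a b /\ F2 a (- b) = - F2 a b.

(* The slice function I(F): f(alpha + beta J) = F1(alpha,beta) + J F2(alpha,beta)
   on Omega (value outside Omega irrelevant). *)
Definition rep_of (x : A) : R * R * A :=
  epsilon (inhabits (0, 0, 0))
    (fun p : R * R * A =>
       [/\ D (p.1.1, p.1.2), inS p.2 & x = p.1.1%:A + p.1.2 *: p.2]).

Definition sliceI (F1 F2 : R -> R -> A) (x : A) : A :=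
  let p := rep_of x in F1 p.1.1 p.1.2 + p.2 * F2 p.1.1 p.1.2.

(* Product of stem functions in A_C:
   (F1 + i F2)(G1 + i G2) = (F1 G1 - F2 G2) + i (F1 G2 + F2 G1) *)
Definition stem_mul1 (F1 F2 G1 G2 : R -> R -> A) : R -> R -> A :=
  fun a b => F1 a b * G1 a b - F2 a b * G2 a b.
Definition stem_mul2 (F1 F2 G1 G2 : R -> R -> A) : R -> R -> A :=
  fun a b => F1 a b * G2 a b + F2 a b * G1 a b.

Definition stem_c (F : R -> R -> A) : R -> R -> A := fun a b => c (F a b).

Definition inV (h : A -> A) (x : A) : Prop := inOmega x /\ h x = 0.

Definition im (x : A) : A := x - (2%:R^-1 : R) *: tr x.
Definition sderiv (h : A -> A) (x : A) : A :=
  (2%:R^-1 : R) *: ((im x)^-1 * (h x - h (c x))).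

End SliceDefs.

(* Main.v *)
Require Import Defs.
From HB Require Import structures.
From mathcomp Require Import all_boot all_order all_algebra.
From mathcomp Require Import falgebra.
From mathcomp Require Import reals ring lra.
From Stdlib Require Import ClassicalEpsilon.
Import GRing.Theory Num.Theory.
Local Open Scope ring_scope.
Set Implicit Arguments.
Unset Strict Implicit.
Unset Printing Implicit Defensive.

Section Aux.
Variables (R : realType) (A : falgType R) (c : A -> A) (D : R * R -> Prop).
Hypothesis Hc : is_involution c.
Hypothesis HDconj : conj_invariant D.

Lemma cD x y : c (x + y) = c x + c y. Proof. by case: Hc. Qed.
Lemma cZ (r : R) x : c (r *: x) = r *: c x. Proof. by case: Hc. Qed.
Lemma cK x : c (c x) = x. Proof. by case: Hc. Qed.
Lemma cM x y : c (x * y) = c y * c x. Proof. by case: Hc. Qed.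
Lemma cR (r : R) : c (r%:A) = r%:A. Proof. by case: Hc. Qed.
Lemma c0 : c 0 = 0. Proof. by have := cZ 0 0; rewrite !scale0r. Qed.
Lemma cN x : c (- x) = - c x. Proof. by rewrite -scaleN1r cZ scaleN1r. Qed.
Lemma cB x y : c (x - y) = c x - c y. Proof. by rewrite cD cN. Qed.
Lemma c1 : c 1 = 1. Proof. by have := cR 1; rewrite scale1r. Qed.
Lemma c_inj x y : c x = c y -> x = y. Proof. by move=> H; rewrite -(cK x) H cK. Qed.

Lemma inS_c J : inS c J -> c J = - J.
Proof. by case=> /eqP; rewrite /tr addrC addr_eq0 => /eqP. Qed.
Lemma inS_sq J : inS c J -> J * J = -1.
Proof. move=> HJ; have [_] := HJ; rewrite /nrm inS_c // mulrN => /eqP.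
by rewrite eqr_oppLR => /eqP. Qed.
Lemma inS_N J : inS c J -> inS c (- J).
Proof. move=> HJ; split; rewrite /tr /nrm cN inS_c //.
  by rewrite opprK addrC subrr. by rewrite opprK mulNr inS_sq // opprK. Qed.
Lemma inS_neq0 J : inS c J -> J <> 0.
Proof. move=> HJ J0; have := inS_sq HJ; rewrite J0 mulr0 => /eqP.
by rewrite eq_sym oppr_eq0 oner_eq0. Qed.

Lemma inv_eq (x y : A) : y * x = 1 -> x * y = 1 -> x^-1 = y.
Proof. move=> H1 H2; have xU : x \is a GRing.unit by apply/unitrP; exists y.
by rewrite -[y]mul1r -(mulVr xU) -mulrA H2 mulr1. Qed.

Lemma scal_inj (r s : R) : r%:A = s%:A :> A -> r = s.
Proof. move=> /eqP; rewrite -subr_eq0 -scalerBl scaler_eq0 oner_eq0 orbF subr_eq0.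
by move/eqP. Qed.

Lemma addr_pm (x y : A) : (x + y) + (x - y) = x + x.
Proof. by rewrite addrACA subrr addr0. Qed.

Lemma sqZ (b : R) (J : A) : (b *: J) * (b *: J) = (b * b) *: (J * J).
Proof. by rewrite -scalerAl -scalerAr scalerA. Qed.

Lemma rep_unique a b J a' b' K : inS c J -> inS c K ->
  a%:A + b *: J = a'%:A + b' *: K ->
  a' = a /\ ((b' = b /\ K = J) \/ (b' = - b /\ K = - J) \/ (b = 0 /\ b' = 0)).
Proof.
move=> HJ HK E.
have Ec : a%:A - b *: J = a'%:A - b' *: K.
  have := congr1 c E; rewrite !cD !cR !cZ !inS_c // !scalerN. done.
have H2 := congr2 (fun u v => u + v) E Ec; rewrite /= !addr_pm -!scalerDl in H2.
have Ea : a' = a by have := scal_inj H2; lra.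
subst a'; split => //.
have Eb : b *: J = b' *: K by apply: (addrI (a%:A)).
have Ebb : b * b = b' * b'.
  have := congr2 (fun u v => u * v) Eb Eb; rewrite /= !sqZ !inS_sq // !scalerN.
  by move/oppr_inj; rewrite -!/(_ %:A) => /scal_inj.
have [b0|bn0] := eqVneq b 0.
  right; right; split => //; move: Ebb; rewrite b0 mulr0 => /esym/eqP.
  by rewrite mulf_eq0 orbb => /eqP.
have : b' ^+ 2 == b ^+ 2 by rewrite !expr2 Ebb.
rewrite eqf_sqr => /orP [] /eqP Eb'.
  left; split => //; subst b'; by apply: (can_inj (scalerK bn0)); rewrite Eb.
right; left; split => //; subst b'; apply: (can_inj (scalerK bn0)).
by rewrite scalerN Eb scaleNr opprK.
Qed.

Lemma half_eq0 (x : A) : x = - x -> x = 0.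
Proof.
move=> H; have : (1 + 1 : R) *: x = 0 by rewrite scalerDl scale1r {1}H addNr.
move/eqP; rewrite scaler_eq0 => /orP [/eqP H1|/eqP //]; exfalso; clear H; lra.
Qed.

Lemma stem_F2_0 (F1 F2 : R -> R -> A) a : is_stem D F1 F2 -> D (a, 0) -> F2 a 0 = 0.
Proof. move=> HF Da; have [_ H] := HF a 0 Da; rewrite oppr0 in H.
exact: half_eq0. Qed.

Lemma sliceI_val (F1 F2 : R -> R -> A) a b J : is_stem D F1 F2 -> D (a, b) -> inS c J ->
  sliceI c D F1 F2 (a%:A + b *: J) = F1 a b + J * F2 a b.
Proof.
move=> HF Dab HJ; rewrite /sliceI /rep_of.
set P := (fun p : R * R * A =>
   [/\ D (p.1.1, p.1.2), inS c p.2 & a%:A + b *: J = p.1.1%:A + p.1.2 *: p.2]).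
have Hp : P (epsilon (inhabits (0, 0, 0)) P).
  by apply: epsilon_spec; exists (a, b, J).
move: (epsilon _ P) Hp => [[a' b'] K] [/= Dp HK E].
have [-> [[-> ->]|[[-> ->]|[b0 b'0]]]] := rep_unique HJ HK E => //.
  by have [-> ->] := HF a b Dab; rewrite mulrNN.
subst; rewrite !(stem_F2_0 HF Dab) !mulr0 //.
Qed.

Lemma Sx_char a b J w : inS c J ->
  (inSx c (a%:A + b *: J) w <-> exists2 I, inS c I & w = a%:A + b *: I).
Proof.
move=> HJ; split.
  move=> [a' [b' [J' [I' [HJ' HI' Ex ->]]]]].
  have [-> [[-> _]|[[-> _]|[-> ->]]]] := rep_unique HJ HJ' Ex.
  - by exists I'.
  - by exists (- I'); [apply: inS_N | rewrite scaleNr scalerN].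
  - by exists J => //; rewrite !scale0r.
by move=> [I HI ->]; exists a, b, J, I.
Qed.

Lemma stem_mul (F1 F2 G1 G2 : R -> R -> A) : is_stem D F1 F2 -> is_stem D G1 G2 ->
  is_stem D (stem_mul1 F1 F2 G1 G2) (stem_mul2 F1 F2 G1 G2).
Proof.
move=> HF HG a b Dab; have [E1 E2] := HF a b Dab; have [E3 E4] := HG a b Dab.
rewrite /stem_mul1 /stem_mul2 E1 E2 E3 E4 mulrNN mulrN mulNr; split => //.
by rewrite opprD.
Qed.

Lemma stem_cc (F1 F2 : R -> R -> A) : is_stem D F1 F2 ->
  is_stem D (stem_c c F1) (stem_c c F2).
Proof. move=> HF a b Dab; have [E1 E2] := HF a b Dab.
by rewrite /stem_c E1 E2 cN. Qed.

Lemma cx_val a b J : inS c J -> c (a%:A + b *: J) = a%:A + b *: (- J).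
Proof. by move=> HJ; rewrite cD cR cZ inS_c. Qed.

Lemma sderiv_val (F1 F2 : R -> R -> A) a b J : is_stem D F1 F2 -> D (a, b) ->
  inS c J -> b != 0 ->
  sderiv c (sliceI c D F1 F2) (a%:A + b *: J) = b^-1 *: F2 a b.
Proof.
move=> HF Dab HJ bn0.
have HJN := inS_N HJ.
rewrite /sderiv cx_val // !sliceI_val //.
have -> : im c (a%:A + b *: J) = b *: J.
  rewrite /im /tr cx_val // scalerN addrACA subrr addr0 -scalerDl scalerA.
  have -> : (2%:R^-1 * (a + a)) = a by lra.
  by rewrite addrAC subrr add0r.
have -> : (b *: J)^-1 = b^-1 *: (- J).
  apply: inv_eq; rewrite -scalerAl -scalerAr scalerA ?mulVf ?mulfV //.
  1,2: by rewrite scale1r ?mulNr ?mulrN inS_sq // opprK.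
rewrite mulNr opprD opprK addrACA subrr add0r -scalerAl mulrDr !mulrA.
rewrite mulNr inS_sq // opprK mul1r -mulr2n -scaler_nat !scalerA.
congr (_ *: _); rewrite mulrAC mulVf ?mul1r //.
by rewrite pnatr_eq0.
Qed.

Lemma central_mul (u v : A) : central u -> central v -> central (u * v).
Proof. by move=> Hu Hv y; rewrite -mulrA Hv mulrA Hu mulrA. Qed.

Lemma central_inv (u : A) : central u -> u \is a GRing.unit -> central (u^-1).
Proof.
move=> Hu uU y; apply: (mulrI uU); rewrite mulrA mulrV // mul1r mulrA Hu.
by rewrite -mulrA mulrV // mulr1.
Qed.

Lemma central_Z (k : R) (u : A) : central u -> central (k *: u).
Proof. by move=> Hu y; rewrite -scalerAl Hu scalerAr. Qed.

Lemma unitZ (k : R) (z : A) : k != 0 -> z \is a GRing.unit -> (k *: z) \is a GRing.unit.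
Proof.
move=> kn0 zU; apply/unitrP; exists (k^-1 *: z^-1).
by rewrite -!scalerAl -!scalerAr !scalerA mulVf // mulfV // mulVr // mulrV // scale1r.
Qed.

Lemma nrmZ (k : R) (u : A) : nrm c (k *: u) = (k * k) *: nrm c u.
Proof. by rewrite /nrm cZ -scalerAl -scalerAr scalerA. Qed.

Lemma inC_scale (k : R) (u : A) : inC c u -> inC c (k *: u).
Proof.
have [->|kn0] := eqVneq k 0; first by rewrite scale0r; left.
move=> [->|[H1 H2 H3 H4]]; first by rewrite scaler0; left.
right; rewrite cZ !nrmZ; split; try exact: central_Z;
  by apply: unitZ => //; rewrite mulf_neq0.
Qed.

Lemma inC_unscale (k : R) (u : A) : k != 0 -> inC c (k *: u) -> inC c u.
Proof. by move=> kn0 /(inC_scale k^-1); rewrite scalerA mulVf // scale1r. Qed.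

Lemma inC_unit (u : A) : inC c u -> u != 0 -> u \is a GRing.unit.
Proof.
move=> [->|[H1 H2 H3 H4]]; first by rewrite eqxx.
move=> _; apply/unitrP; exists (c u * (nrm c u)^-1).
have E1 : u * (c u * (nrm c u)^-1) = 1 by rewrite mulrA mulrV.
have E2 : ((nrm c (c u))^-1 * c u) * u = 1.
  rewrite -mulrA; have -> : c u * u = nrm c (c u) by rewrite /nrm cK.
  by rewrite mulVr.
have Ey : c u * (nrm c u)^-1 = (nrm c (c u))^-1 * c u.
  transitivity (((nrm c (c u))^-1 * c u * u) * (c u * (nrm c u)^-1)).
    by rewrite E2 mul1r.
  by rewrite -mulrA E1 mulr1.
by split => //; rewrite Ey.
Qed.

Lemma inC_c (u : A) : inC c u -> inC c (c u).
Proof. move=> [->|[H1 H2 H3 H4]]; first by left; rewrite c0.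
by right; rewrite cK. Qed.

Lemma c_inv (u : A) : u \is a GRing.unit -> c (u^-1) = (c u)^-1.
Proof.
move=> uU; apply/esym/inv_eq; rewrite -cM ?mulrV ?mulVr // c1 //.
Qed.

Lemma inC_mul (u v : A) : inC c u -> inC c v -> inC c (u * v).
Proof.
move=> [->|[H1 H2 H3 H4]]; first by rewrite mul0r; left.
move=> [->|[H5 H6 H7 H8]]; first by rewrite mulr0; left.
right.
have E1 : nrm c (u * v) = nrm c v * nrm c u.
  by rewrite /nrm cM mulrA -(mulrA u) -/(nrm c v) -H5 -mulrA.
have Nc x : c x * x = nrm c (c x) by rewrite /nrm cK.
have E2 : nrm c (c (u * v)) = nrm c (c u) * nrm c (c v).
  have -> : nrm c (c (u*v)) = c v * (c u * u) * v by rewrite /nrm cK cM !mulrA.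
  by rewrite Nc -H3 -mulrA Nc.
rewrite E1 E2; split; try exact: central_mul; by rewrite unitrMl.
Qed.

Lemma inC_unitc (u : A) : inC c u -> u \is a GRing.unit -> c u \is a GRing.unit.
Proof.
move=> Hu uU; apply: inC_unit; first exact: inC_c.
apply/eqP => cu0; move: uU; have -> : u = 0 by apply: c_inj; rewrite cu0 c0.
by rewrite unitr0.
Qed.

Lemma inC_inv (u : A) : inC c u -> inC c (u^-1).
Proof.
move=> Hu; have [->|un0] := eqVneq u 0; first by rewrite invr0; left.
have uU := inC_unit Hu un0; have cuU := inC_unitc Hu uU.
case: Hu => [u0|[H1 H2 H3 H4]]; first by rewrite u0 eqxx in un0.
right.
have E1 : nrm c (u^-1) = (nrm c (c u))^-1.
  by rewrite /nrm c_inv // cK invrM.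
have E2 : nrm c (c (u^-1)) = (nrm c u)^-1.
  by rewrite /nrm cK c_inv // invrM.
rewrite E1 E2; split; try exact: central_inv; by rewrite unitrV.
Qed.

Lemma c_conj (u X : A) : inC c u -> u \is a GRing.unit ->
  c u * X = (u^-1 * X * u) * c u.
Proof.
move=> [u0|[H1 H2 H3 H4]] uU; first by move: uU; rewrite u0 unitr0.
have E : c u = u^-1 * nrm c u by rewrite /nrm mulKr.
by rewrite {1}E -(mulrA u^-1 (nrm c u)) H1 /nrm !mulrA.
Qed.

Lemma conjS (u K : A) : inC c u -> u \is a GRing.unit -> inS c K ->
  inS c (u^-1 * K * u).
Proof.
move=> Hu uU HK.
have cuU := inC_unitc Hu uU.
have Ec : c (u^-1 * K * u) = - (u^-1 * K * u).
  rewrite !cM c_inv // (inS_c HK) mulrA c_conj // mulrK //.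
  by rewrite mulrN mulNr.
split; first by rewrite /tr Ec subrr.
rewrite /nrm Ec mulrN -!mulrA (mulrA u) mulrV // mul1r (mulrA K) inS_sq //.
by rewrite mulN1r mulrN mulVr // opprK.
Qed.

Lemma zero_iff (F1 F2 : R -> R -> A) a b J w : is_stem D F1 F2 -> D (a, b) -> inS c J ->
  (inSx c (a%:A + b *: J) w /\ inV c D (sliceI c D F1 F2) w) <->
  exists2 I, inS c I & (w = a%:A + b *: I /\ F1 a b + I * F2 a b = 0).
Proof.
move=> HF Dab HJ; split.
  move=> [/(Sx_char _ _ _ HJ) [I HI ->] [_]]; rewrite sliceI_val // => H.
  by exists I.
move=> [I HI [-> H]]; split; first by apply/(Sx_char _ _ _ HJ); exists I.
split; first by exists a, b, I.
by rewrite sliceI_val.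
Qed.

Lemma pt_inj (a b : R) (I I' : A) : b != 0 -> a%:A + b *: I = a%:A + b *: I' -> I = I'.
Proof. by move=> bn0 /addrI; apply: (can_inj (scalerK bn0)). Qed.

Lemma single_zero (F1 F2 : R -> R -> A) a b J y : is_stem D F1 F2 -> D (a, b) ->
  inS c J -> b != 0 ->
  (forall w, inSx c (a%:A + b *: J) w /\ inV c D (sliceI c D F1 F2) w <-> w = y) ->
  F2 a b != 0 /\ exists2 I1, inS c I1 & (y = a%:A + b *: I1 /\ F1 a b + I1 * F2 a b = 0).
Proof.
move=> HF Dab HJ bn0 Hy.
have [I1 HI1 [Ey H1]] : exists2 I1, inS c I1 & (y = a%:A + b *: I1 /\ F1 a b + I1 * F2 a b = 0).
  by apply/(zero_iff _ HF Dab HJ); apply/Hy.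
split; last by exists I1.
apply/eqP => F20; rewrite F20 mulr0 addr0 in H1.
have : a%:A + b *: (- I1) = y.
  apply/Hy/(zero_iff _ HF Dab HJ); exists (- I1); first exact: inS_N.
  by rewrite F20 H1 mulr0 addr0.
rewrite Ey => /(pt_inj bn0) E.
by apply: (inS_neq0 HI1); apply: half_eq0; rewrite -{1}E.
Qed.

Lemma unique_zero (P m I I' : A) : m \is a GRing.unit ->
  P + I * m = 0 -> P + I' * m = 0 -> I = I'.
Proof. by move=> mU H1; rewrite -H1 => /addrI /(mulIr mU). Qed.

Lemma abel1 (x y : A) : - x - y + (y + x) = 0.
Proof. by rewrite -opprD [y + x]addrC addNr. Qed.

Lemma fgv_zero (a b p q I1 : A) : inS c I1 -> a = - (I1 * b) ->
  (a * p - b * q) + I1 * (a * q + b * p) = 0.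
Proof.
move=> HI1 ->; rewrite mulrDr !mulNr mulrN !mulrA inS_sq // !mulN1r mulNr opprK.
exact: abel1.
Qed.

Lemma both_zero (a b I : A) : inS c I -> a + I * b = 0 -> a + (- I) * b = 0 ->
  a = 0 /\ b = 0.
Proof.
move=> HI H1 H2.
have a0 : a = 0.
  apply: half_eq0; apply/eqP; rewrite -addr_eq0; apply/eqP.
  by move: (congr2 (fun u v => u + v) H1 H2); rewrite /= mulNr addr_pm addr0.
split => //; rewrite a0 add0r in H1.
by rewrite -[b]mul1r -[1](opprK) -(inS_sq HI) mulNr -mulrA H1 mulr0 oppr0.
Qed.

Lemma unitV (x : A) : x \is a GRing.unit -> x^-1 \is a GRing.unit.
Proof. by rewrite unitrV. Qed.

Lemma efg_alg (a b q K0 I : A) : inS c K0 ->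
  a * - (K0 * q) - b * q + I * ((a - b * K0) * q) = (I * (a - b * K0) - (a - b * K0) * K0) * q.
Proof.
move=> HK; rewrite !mulrBl !mulrBr !mulrN !mulrA -(mulrA b K0 K0) inS_sq // mulrN1 mulNr.
by rewrite mulrBl opprK opprD [RHS]addrC.
Qed.

Lemma target_eq (u K0 : A) (al be : R) : inC c u -> u \is a GRing.unit ->
  (c u)^-1 * (al%:A + be *: K0) * c u = al%:A + be *: (u * K0 * u^-1).
Proof.
move=> Hu uU; have cuU := inC_unitc Hu uU.
have E : u * K0 * u^-1 = (c u)^-1 * K0 * c u.
  apply: (mulrI cuU); rewrite c_conj // !mulrA mulVr // mul1r divrK //.
  by rewrite mulrV // mul1r.
rewrite E mulrDr mulrDl -!scalerAr -!scalerAl mulr1 mulVr //.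
Qed.

Lemma cond_eq (al be : R) (I1 K0 b : A) : be != 0 -> inS c I1 ->
  c (al%:A + be *: I1) * (be^-1 *: b) - (be^-1 *: b) * (al%:A + be *: K0)
  = - (I1 * b + b * K0).
Proof.
move=> ben0 HI1; rewrite cx_val // mulrDl mulrDr mulr_algl mulr_algr.
rewrite -scalerAl -scalerAr -!scalerAr -scalerAl !scalerA mulfV //.
rewrite !scale1r mulNr opprD addrACA subrr add0r opprD.
done.
Qed.

Lemma main_thm (F1 F2 G1 G2 : R -> R -> A)
  (HF : is_stem D F1 F2) (HG : is_stem D G1 G2) :
  let f := sliceI c D F1 F2 in
  let g := sliceI c D G1 G2 in
  let fg := sliceI c D (stem_mul1 F1 F2 G1 G2) (stem_mul2 F1 F2 G1 G2) in
  let fc := sliceI c D (stem_c c F1) (stem_c c F2) in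
  [/\
   (forall x, inOmega c D x -> is_real x ->
      inV c D f x \/ inV c D g x -> inV c D fg x),
   (forall x, inOmega c D x ->
      (forall y, inSx c x y -> inV c D f y) \/
      (forall y, inSx c x y -> inV c D g y) ->
      forall y, inSx c x y -> inV c D fg y) &
   (forall x, inOmega c D x -> ~ is_real x ->
      inC c (sderiv c f x) -> inC c (sderiv c g x) -> inC c (sderiv c fg x) ->
      [/\
       (forall y,
          (forall w, inSx c x w /\ inV c D f w <-> w = y) ->
          (forall w, ~ (inSx c x w /\ inV c D g w)) ->
          forall w, inSx c x w /\ inV c D fg w <-> w = y),
       (forall z,
          (forall w, ~ (inSx c x w /\ inV c D f w)) ->
          (forall w, inSx c x w /\ inV c D g w <-> w = z) ->
          (inC c (fc z) /\ fc z <> 0) /\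
          (forall w, inSx c x w /\ inV c D fg w <-> w = (fc z)^-1 * z * fc z)) &
       (forall y z,
          (forall w, inSx c x w /\ inV c D f w <-> w = y) ->
          (forall w, inSx c x w /\ inV c D g w <-> w = z) ->
          (c y * sderiv c f x = sderiv c f x * z ->
             forall w, inSx c x w -> inV c D fg w) /\
          (c y * sderiv c f x <> sderiv c f x * z ->
             forall w, inSx c x w /\ inV c D fg w <-> w = y))])].
Proof.
move=> f g fg fc; rewrite {}/f {}/g {}/fg {}/fc.
have HFG := stem_mul HF HG; have HFc := stem_cc HF.
split.
- move=> x [al [be [J [Dab HJ Ex]]]] [r Er] Hfg.
  have be0 : be = 0.
    have Ex' : al%:A + be *: J = r%:A + 0 *: J by rewrite -Ex Er scale0r addr0.
    have [_ [[H _]|[[H _]|[H _]]]] := rep_unique HJ HJ Ex'.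
    + by rewrite -H.
    + by apply/eqP; rewrite -oppr_eq0 -H.
    + exact: H.
  subst be.
  split; first by case: Hfg => [[]|[]].
  have F20 := stem_F2_0 HF Dab; have G20 := stem_F2_0 HG Dab.
  rewrite Ex sliceI_val // /stem_mul1 /stem_mul2 F20 G20.
  case: Hfg => [[_]|[_]]; rewrite Ex sliceI_val // ?F20 ?G20 mulr0 addr0 => ->;
    by rewrite ?mulr0 ?mul0r ?subrr ?addr0 ?mulr0 ?addr0.
- move=> x [al [be [J [Dab HJ ->]]]] Hall w Hw.
  have [I HI Ew] := (Sx_char _ _ _ HJ).1 Hw.
  have Hm : inSx c (al%:A + be *: J) (al%:A + be *: (- I)).
    by apply/(Sx_char _ _ _ HJ); exists (- I) => //; apply: inS_N.
  split; first by case: Hall => H; have [] := H w Hw.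
  rewrite Ew sliceI_val // /stem_mul1 /stem_mul2.
  have key : forall (P1 P2 : R -> R -> A), is_stem D P1 P2 ->
      (forall y, inSx c (al%:A + be *: J) y -> inV c D (sliceI c D P1 P2) y) ->
      P1 al be = 0 /\ P2 al be = 0.
    move=> P1 P2 HP H; have [_ H1] := H _ Hw; have [_ H2] := H _ Hm.
    rewrite Ew sliceI_val // in H1; rewrite sliceI_val // in H2; last exact: inS_N.
    exact: both_zero HI H1 H2.
  case: Hall => H; [have [-> ->] := key _ _ HF H | have [-> ->] := key _ _ HG H];
    by rewrite ?(mul0r, mulr0, subrr, addr0, add0r, subr0, oppr0).
- move=> x [al [be [J [Dab HJ ->]]]] Hnr Hf' Hg' Hfg'.
  have ben0 : be != 0.
    by apply/eqP => be0; apply: Hnr; exists al; rewrite be0 scale0r addr0.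
  rewrite (sderiv_val HF) // in Hf'; rewrite (sderiv_val HG) // in Hg'.
  rewrite (sderiv_val HFG) // in Hfg'.
  have bi0 : be^-1 != 0 by rewrite invr_neq0.
  have HbC := inC_unscale bi0 Hf'; have HqC := inC_unscale bi0 Hg'.
  have HmC := inC_unscale bi0 Hfg'.
  split.
  + move=> y Hy Hg w.
    have [bn0 [I1 HI1 [Ey H1]]] := single_zero HF Dab HJ ben0 Hy.
    have Ea : F1 al be = - (I1 * F2 al be) by apply/eqP; rewrite -addr_eq0 H1.
    have bU := inC_unit HbC bn0.
    have mn0 : stem_mul2 F1 F2 G1 G2 al be != 0.
      apply/eqP; rewrite /stem_mul2 Ea => /eqP Hm.
      move: Hm; rewrite mulNr addrC subr_eq0 -mulrA => /eqP Hm.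
      apply: (Hg (al%:A + be *: (- ((F2 al be)^-1 * I1 * F2 al be)))).
      apply/(zero_iff _ HG Dab HJ); exists (- ((F2 al be)^-1 * I1 * F2 al be)).
        by apply: inS_N; apply: conjS.
      split => //.
      by rewrite mulNr -!mulrA -Hm mulKr // subrr.
    have mU := inC_unit HmC mn0.
    rewrite zero_iff //; split.
      move=> [I HI [-> HIz]]; rewrite Ey; congr (_ + _ *: _).
      apply: (unique_zero mU HIz); exact: fgv_zero.
    by move=> ->; exists I1 => //; split => //; exact: fgv_zero.
  + move=> z Hf Hz.
    have [qn0 [K0 HK0 [Ez H2]]] := single_zero HG Dab HJ ben0 Hz.
    have Ep : G1 al be = - (K0 * G2 al be) by apply/eqP; rewrite -addr_eq0 H2.
    have qU := inC_unit HqC qn0.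
    have hf : forall I, inS c I -> F1 al be + I * F2 al be <> 0.
      move=> I HI H; apply: (Hf (al%:A + be *: I)).
      by apply/(zero_iff _ HF Dab HJ); exists I.
    pose u := F1 al be - F2 al be * K0.
    have Em : stem_mul2 F1 F2 G1 G2 al be = u * G2 al be.
      by rewrite /stem_mul2 Ep /u mulrBl mulrN mulrA.
    have Hu : inC c u.
      have -> : u = stem_mul2 F1 F2 G1 G2 al be * (G2 al be)^-1 by rewrite Em mulrK.
      exact: inC_mul HmC (inC_inv HqC).
    have un0 : u != 0.
      apply/eqP => u0.
      have Ea : F1 al be = F2 al be * K0.
        by apply/eqP; rewrite -subr_eq0 -/u u0.
      have [b0|bn0] := eqVneq (F2 al be) 0.
        by apply: (hf J HJ); rewrite Ea b0 mul0r mulr0 addr0.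
      have bU := inC_unit HbC bn0.
      apply: (hf (- (F2 al be * K0 * (F2 al be)^-1))).
        by apply: inS_N; have := conjS (inC_inv HbC) (unitV bU) HK0; rewrite invrK.
      by rewrite Ea mulNr divrK // subrr.
    have uU := inC_unit Hu un0.
    have Efc : sliceI c D (stem_c c F1) (stem_c c F2) z = c u.
      by rewrite Ez sliceI_val // /stem_c /u cB cM (inS_c HK0) mulNr opprK.
    rewrite Efc; split.
      split; first exact: inC_c.
      by move=> cu0; move: un0; rewrite -(cK u) cu0 c0 eqxx.
    move=> w; rewrite Ez target_eq // zero_iff //.
    have Efg : forall I, stem_mul1 F1 F2 G1 G2 al be + I * stem_mul2 F1 F2 G1 G2 al be
        = (I * u - u * K0) * G2 al be.
      by move=> I; rewrite Em /stem_mul1 Ep efg_alg.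
    split.
      move=> [I HI [-> HIz]]; rewrite Efg -(mul0r (G2 al be)) in HIz.
      move/(mulIr qU)/eqP: HIz; rewrite subr_eq0 => /eqP EI.
      by rewrite -EI mulrK.
    move=> ->; exists (u * K0 * u^-1).
      by have := conjS (inC_inv Hu) (unitV uU) HK0; rewrite invrK.
    by split => //; rewrite Efg divrK // subrr mul0r.
  + move=> y z Hy Hz.
    have [bn0 [I1 HI1 [Ey H1]]] := single_zero HF Dab HJ ben0 Hy.
    have Ea : F1 al be = - (I1 * F2 al be) by apply/eqP; rewrite -addr_eq0 H1.
    have [qn0 [K0 HK0 [Ez H2]]] := single_zero HG Dab HJ ben0 Hz.
    have Ep : G1 al be = - (K0 * G2 al be) by apply/eqP; rewrite -addr_eq0 H2.
    have qU := inC_unit HqC qn0.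
    have Hce := cond_eq al K0 (F2 al be) ben0 HI1.
    have Em : stem_mul2 F1 F2 G1 G2 al be
        = - ((I1 * F2 al be + F2 al be * K0) * G2 al be).
      by rewrite /stem_mul2 Ea Ep mulrN mulNr mulrDl opprD mulrA.
    rewrite Ey Ez (sderiv_val HF) //; split.
      move=> Hc0 w Hw.
      have E0 : I1 * F2 al be + F2 al be * K0 = 0.
        by apply/eqP; rewrite -oppr_eq0 -Hce Hc0 subrr.
      have E1 : F2 al be * K0 = - (I1 * F2 al be).
        by apply/eqP; rewrite -addr_eq0 addrC E0.
      have [I HI ->] := (Sx_char _ _ _ HJ).1 Hw.
      split; first by exists al, be, I.
      rewrite sliceI_val // Em E0 mul0r oppr0 mulr0 addr0 /stem_mul1 Ea Ep mulrNN.
      by rewrite mulrA -(mulrA I1 (F2 al be) K0) E1 mulrN mulrA inS_sq // mulN1r opprK subrr.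
    move=> Hne w.
    have En : I1 * F2 al be + F2 al be * K0 != 0.
      apply/eqP => E; apply: Hne; apply/eqP; rewrite -subr_eq0 Hce E oppr0 //.
    have mn0 : stem_mul2 F1 F2 G1 G2 al be != 0.
      rewrite Em oppr_eq0; apply: contra En => /eqP H; apply/eqP; apply: (mulIr qU).
      by rewrite H mul0r.
    have mU := inC_unit HmC mn0.
    rewrite zero_iff //; split.
      move=> [I HI [-> HIz]]; congr (_ + _ *: _).
      apply: (unique_zero mU HIz); exact: fgv_zero.
    by move=> ->; exists I1 => //; split => //; exact: fgv_zero.
Qed.


End Aux.

Theorem theorem5p12 (R : realType) (A : falgType R) (c : A -> A)
  (D : R * R -> Prop)
  (Hc : is_involution c)
  (HDne : exists p, D p)
  (HDconj : conj_invariant D)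
  (HSne : exists J, inS c J)
  (F1 F2 G1 G2 : R -> R -> A)
  (HF : is_stem D F1 F2) (HG : is_stem D G1 G2) :
  let f := sliceI c D F1 F2 in
  let g := sliceI c D G1 G2 in
  let fg := sliceI c D (stem_mul1 F1 F2 G1 G2) (stem_mul2 F1 F2 G1 G2) in
  let fc := sliceI c D (stem_c c F1) (stem_c c F2) in
  [/\
   (* real points *)
   (forall x, inOmega c D x -> is_real x ->
      inV c D f x \/ inV c D g x -> inV c D fg x),
   (* (1) *)
   (forall x, inOmega c D x ->
      (forall y, inSx c x y -> inV c D f y) \/
      (forall y, inSx c x y -> inV c D g y) ->
      forall y, inSx c x y -> inV c D fg y) &
   (forall x, inOmega c D x -> ~ is_real x ->
      inC c (sderiv c f x) -> inC c (sderiv c g x) -> inC c (sderiv c fg x) ->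
      [/\
       (* (2) *)
       (forall y,
          (forall w, inSx c x w /\ inV c D f w <-> w = y) ->
          (forall w, ~ (inSx c x w /\ inV c D g w)) ->
          forall w, inSx c x w /\ inV c D fg w <-> w = y),
       (* (3) *)
       (forall z,
          (forall w, ~ (inSx c x w /\ inV c D f w)) ->
          (forall w, inSx c x w /\ inV c D g w <-> w = z) ->
          (inC c (fc z) /\ fc z <> 0) /\
          (forall w, inSx c x w /\ inV c D fg w <-> w = (fc z)^-1 * z * fc z)) &
       (* (4) *)
       (forall y z,
          (forall w, inSx c x w /\ inV c D f w <-> w = y) ->
          (forall w, inSx c x w /\ inV c D g w <-> w = z) ->
          (c y * sderiv c f x = sderiv c f x * z ->
             forall w, inSx c x w -> inV c D fg w) /\
          (c y * sderiv c f x <> sderiv c f x * z ->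
             forall w, inSx c x w /\ inV c D fg w <-> w = y))])].
Proof.
exact: (@main_thm R A c D Hc F1 F2 G1 G2 HF HG).
Qed.
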